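(* Let $(n_k)_{k\ge0}$ be a strictly increasing sequence of positive integers with $n_0=1$ such that for every $\varepsilon>0$ there exists $\lambda\in\mathbb{T}\setminus\{1\}$ with $\sup_{k\ge0}|\lambda^{n_k}-1|\le\varepsilon$ and $|\lambda^{n_k}-1|\to0$ as $k\to\infty$. Then there exists a perfect compact subset $K$ of $\mathbb{T}$ such that the metric space $(K,d_{(n_k)})$ is separable and $|\lambda^{n_k}-1|\to0$ as $k\to\infty$ for every $\lambda\in K$.
   Context: $\mathbb{T}$ is the unit circle. For $\lambda,\mu\in\mathbb{T}$, $d_{(n_k)}(\lambda,\mu)=\sup_{k\ge0}|\lambda^{n_k}-\mu^{n_k}|$; this is a metric on $\mathbb{T}$ when $n_0=1$. *)

(* Defs.v *)
From Stdlib Require Import Reals List.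
Open Scope R_scope.

Definition Cx := (R * R)%type.
Definition Cone : Cx := (1, 0).
Definition Cmul (z w : Cx) : Cx :=
  (fst z * fst w - snd z * snd w, fst z * snd w + snd z * fst w).
Definition Csub (z w : Cx) : Cx := (fst z - fst w, snd z - snd w).
Fixpoint Cpow (z : Cx) (n : nat) : Cx :=
  match n with O => Cone | S m => Cmul z (Cpow z m) end.
Definition Cnorm (z : Cx) : R := sqrt (fst z * fst z + snd z * snd z).

Definition onT (z : Cx) : Prop := Cnorm z = 1.

Definition Copen (U : Cx -> Prop) : Prop :=
  forall z, U z -> exists e, 0 < e /\ forall w, Cnorm (Csub w z) < e -> U w.

Definition Ccompact (K : Cx -> Prop) : Prop :=
  forall (I : Type) (U : I -> Cx -> Prop),
    (forall i, Copen (U i)) ->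
    (forall z, K z -> exists i, U i z) ->
    exists l : list I, forall z, K z -> exists i, In i l /\ U i z.

Definition Cclosed (K : Cx -> Prop) : Prop := Copen (fun z => ~ K z).

Definition Cperfect (K : Cx -> Prop) : Prop :=
  (exists z, K z) /\ Cclosed K /\
  forall z, K z -> forall e, 0 < e ->
    exists w, K w /\ w <> z /\ Cnorm (Csub w z) < e.

(* d_{(n_k)}(lam, mu) <= e, i.e. sup_k |lam^{n_k} - mu^{n_k}| <= e *)
Definition d_le (n : nat -> nat) (lam mu : Cx) (e : R) : Prop :=
  forall k, Cnorm (Csub (Cpow lam (n k)) (Cpow mu (n k))) <= e.

Definition d_separable (n : nat -> nat) (K : Cx -> Prop) : Prop :=
  exists s : nat -> Cx, (forall m, K (s m)) /\
    forall z, K z -> forall e, 0 < e -> exists m, d_le n (s m) z e.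

Definition tends_to_one (n : nat -> nat) (lam : Cx) : Prop :=
  Un_cv (fun k => Cnorm (Csub (Cpow lam (n k)) Cone)) 0.

(* Main.v *)
Require Import Defs.
From Stdlib Require Import Reals Lra Lia Psatz List Bool Classical ClassicalEpsilon.
Open Scope R_scope.

Definition E (x : R) : Cx := (cos x, sin x).
Definition h (x : R) : R := 2 * Rabs (sin (x / 2)).

Lemma h_ge0 x : 0 <= h x.
Proof. unfold h; pose proof (Rabs_pos (sin (x/2))); lra. Qed.

Lemma h_0 : h 0 = 0.
Proof. unfold h; replace (0/2) with 0 by field; rewrite sin_0, Rabs_R0; ring. Qed.

Lemma h_opp x : h (-x) = h x.
Proof. unfold h; replace (-x/2) with (-(x/2)) by field; rewrite sin_neg, Rabs_Ropp; auto. Qed.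

Lemma h_add x y : h (x+y) <= h x + h y.
Proof.
  unfold h; replace ((x+y)/2) with (x/2 + y/2) by field; rewrite sin_plus.
  pose proof (Rabs_triang (sin (x/2) * cos (y/2)) (cos (x/2) * sin (y/2))) as H.
  rewrite !Rabs_mult in H.
  assert (Rabs (cos (y/2)) <= 1) by (apply Rabs_le; apply COS_bound).
  assert (Rabs (cos (x/2)) <= 1) by (apply Rabs_le; apply COS_bound).
  pose proof (Rabs_pos (sin (x/2))). pose proof (Rabs_pos (sin (y/2))).
  pose proof (Rabs_pos (cos (x/2))). pose proof (Rabs_pos (cos (y/2))).
  nra.
Qed.

Lemma sin_abs_pos u : 0 < u -> Rabs (sin u) <= u.
Proof.
  intros Hu. pose proof (sin_lt_x u Hu). pose proof (SIN_bound u).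
  pose proof PI2_1.
  apply Rabs_le; split; try lra.
  destruct (Rle_or_lt 1 u); try lra.
  assert (0 < sin u) by (apply sin_gt_0; lra). lra.
Qed.

Lemma sin_abs_le u : Rabs (sin u) <= Rabs u.
Proof.
  destruct (Rtotal_order u 0) as [H|[H|H]].
  - pose proof (sin_abs_pos (-u)). rewrite sin_neg, Rabs_Ropp in H0.
    rewrite (Rabs_left u) by lra. apply H0; lra.
  - subst; rewrite sin_0; lra.
  - rewrite (Rabs_right u) by lra. apply sin_abs_pos; lra.
Qed.

Lemma h_le x : h x <= Rabs x.
Proof.
  unfold h. pose proof (sin_abs_le (x/2)).
  unfold Rdiv in H; rewrite Rabs_mult in H.
  rewrite (Rabs_right (/2)) in H by lra. unfold Rdiv. lra.
Qed.

Lemma E_0 : E 0 = Cone.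
Proof. unfold E, Cone; rewrite cos_0, sin_0; auto. Qed.

Lemma Cnorm_E x : Cnorm (E x) = 1.
Proof.
  unfold Cnorm, E; simpl. rewrite <- sqrt_1. f_equal.
  pose proof (sin2_cos2 x). unfold Rsqr in H. lra.
Qed.

Lemma Cpow_E x m : Cpow (E x) m = E (INR m * x).
Proof.
  induction m; simpl Cpow.
  - simpl INR. rewrite Rmult_0_l, E_0; auto.
  - rewrite IHm. unfold Cmul, E; cbn [fst snd]. rewrite S_INR.
    replace ((INR m + 1) * x) with (x + INR m * x) by ring.
    rewrite cos_plus, sin_plus. f_equal; ring.
Qed.

Lemma dist_E a b : Cnorm (Csub (E a) (E b)) = h (a - b).
Proof.
  unfold Cnorm, Csub, E, h; simpl.
  assert (Hc : cos (a - b) = 1 - 2 * sin ((a-b)/2) * sin ((a-b)/2)).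
  { rewrite <- cos_2a_sin. f_equal. field. }
  rewrite cos_minus in Hc.
  pose proof (sin2_cos2 a). pose proof (sin2_cos2 b). unfold Rsqr in *.
  replace ((cos a - cos b) * (cos a - cos b) + (sin a - sin b) * (sin a - sin b))
    with ((2 * Rabs (sin ((a - b) / 2))) * (2 * Rabs (sin ((a - b) / 2)))).
  - apply sqrt_square. pose proof (Rabs_pos (sin ((a-b)/2))); lra.
  - replace ((2 * Rabs (sin ((a - b) / 2))) * (2 * Rabs (sin ((a - b) / 2))))
      with (4 * (Rabs (sin ((a - b) / 2)) * Rabs (sin ((a - b) / 2)))) by ring.
    rewrite <- Rabs_mult, Rabs_right by (apply Rle_ge; apply Rle_0_sqr).
    nra.
Qed.

Lemma sin_lb3 s : 0 <= s <= 2 -> s <= PI -> s/3 <= sin s.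
Proof.
  intros H1 H2. destruct (SIN s) as [H _]; try lra.
  unfold sin_lb, sin_approx, sin_term in H. simpl in H.
  assert (H' : s - s^3/6 + s^5/120 - s^7/5040 <= sin s).
  { eapply Rle_trans; [|exact H]. right. field. }
  assert (A : 0 <= s * (4 - s*s)) by (apply Rmult_le_pos; nra).
  assert (B : 0 <= s^5 * (42 - s*s)) by (apply Rmult_le_pos; [apply pow_le; lra| nra]).
  lra.
Qed.

Lemma angle (l : Cx) eps : onT l -> 0 < eps <= /2 -> Cnorm (Csub l Cone) <= eps ->
  exists t, E t = l /\ Rabs t <= 3 * eps.
Proof.
  destruct l as [a b]. unfold onT, Cnorm, Csub, Cone; simpl. intros H He Hd.
  assert (Hab : a*a + b*b = 1).
  { rewrite <- (sqrt_sqrt (a*a+b*b)) by nra. rewrite H; ring. }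
  assert (Hd2 : (a-1)*(a-1) + (b-0)*(b-0) <= eps*eps).
  { rewrite <- (sqrt_sqrt ((a-1)*(a-1) + (b-0)*(b-0))) by nra.
    pose proof (sqrt_pos ((a-1)*(a-1) + (b-0)*(b-0))). nra. }
  assert (Ha : 7/8 <= a) by nra.
  assert (Hb : Rabs b <= eps).
  { rewrite <- (Rabs_right eps) by lra. apply Rsqr_le_abs_0. unfold Rsqr. nra. }
  set (y := b / a).
  assert (Hs : sqrt (1 + y²) = / a).
  { apply sqrt_lem_1.
    - pose proof (Rle_0_sqr y); lra.
    - left; apply Rinv_0_lt_compat; lra.
    - unfold y, Rsqr. field_simplify; try lra. rewrite <- Hab. field. lra. }
  set (t := atan y).
  assert (Hc : cos t = a).
  { unfold t; rewrite cos_atan, Hs. field; lra. }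
  assert (Hsn : sin t = b).
  { unfold t; rewrite sin_atan, Hs. unfold y. field; lra. }
  exists t. split.
  - unfold E; rewrite Hc, Hsn; auto.
  - pose proof (atan_bound y). fold t in H0. pose proof PI_4. pose proof PI_RGT_0.
    destruct (Rle_or_lt 0 t).
    + rewrite Rabs_right by lra. pose proof (sin_lb3 t).
      assert (b <= Rabs b) by apply RRle_abs. lra.
    + rewrite Rabs_left by lra. pose proof (sin_lb3 (-t)).
      rewrite sin_neg in H4.
      assert (-b <= Rabs b) by (rewrite <- Rabs_Ropp; apply RRle_abs). lra.
Qed.

Lemma Un_cv_ext (u v : nat -> R) l : (forall k, u k = v k) -> Un_cv u l -> Un_cv v l.
Proof. intros Huv H e He. destruct (H e He) as [N HN]. exists N. intros m Hm. rewrite <- Huv. auto. Qed.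

Lemma le_eta a b : (forall η, 0 < η -> a <= b + η) -> a <= b.
Proof.
  intros H. destruct (Rle_or_lt a b); auto. specialize (H ((a-b)/2)). lra.
Qed.

Fixpoint enc (w : nat -> bool) (N : nat) : nat :=
  match N with O => O | S N' => (2 * enc (fun j => w (S j)) N' + Nat.b2n (w O))%nat end.

Lemma enc_bits N : forall w j, (j < N)%nat -> Nat.testbit (enc w N) j = w j.
Proof.
  induction N; intros w j Hj; [lia|]. cbn [enc]. destruct j.
  - apply Nat.testbit_0_r.
  - rewrite Nat.testbit_succ_r. apply (IHN (fun j => w (S j))). lia.
Qed.

Fixpoint iter_seq (step : (nat -> bool) -> nat -> (nat -> bool)) (N : nat) : nat -> bool :=
  match N with O => fun _ => false | S N' => step (iter_seq step N') N' end.

Lemma abs_fst_le a : Rabs (fst a) <= Cnorm a.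
Proof.
  unfold Cnorm. rewrite <- sqrt_Rsqr_abs. apply sqrt_le_1_alt. unfold Rsqr.
  pose proof (Rle_0_sqr (snd a)). unfold Rsqr in H. lra.
Qed.

Lemma abs_snd_le a : Rabs (snd a) <= Cnorm a.
Proof.
  unfold Cnorm. rewrite <- sqrt_Rsqr_abs. apply sqrt_le_1_alt. unfold Rsqr.
  pose proof (Rle_0_sqr (fst a)). unfold Rsqr in H. lra.
Qed.

Lemma compact_closed (K : Cx -> Prop) : Ccompact K -> Cclosed K.
Proof.
  intros HK z Hz.
  set (L1 := fun x : Cx => Rabs (fst x - fst z) + Rabs (snd x - snd z)).
  set (U := fun (r : {r : R | 0 < r}) x => proj1_sig r < L1 x).
  destruct (HK _ U) as [l Hl].
  - intros r x Hx. unfold U in *. exists ((L1 x - proj1_sig r)/2). split; [lra|].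
    intros w Hw. unfold L1 in *.
    pose proof (abs_fst_le (Csub w x)). pose proof (abs_snd_le (Csub w x)).
    unfold Csub in *; simpl in *.
    pose proof (Rabs_triang (fst x - fst w) (fst w - fst z)).
    pose proof (Rabs_triang (snd x - snd w) (snd w - snd z)).
    replace (fst x - fst w + (fst w - fst z)) with (fst x - fst z) in H1 by ring.
    replace (snd x - snd w + (snd w - snd z)) with (snd x - snd z) in H2 by ring.
    rewrite (Rabs_minus_sym (fst x) (fst w)) in H1. rewrite (Rabs_minus_sym (snd x) (snd w)) in H2.
    lra.
  - intros x Kx.
    assert (Hp : 0 < L1 x / 2).
    { unfold L1. pose proof (Rabs_pos (fst x - fst z)). pose proof (Rabs_pos (snd x - snd z)).
      destruct (Rle_or_lt (Rabs (fst x - fst z) + Rabs (snd x - snd z)) 0); [|lra].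
      exfalso. apply Hz.
      assert (fst x - fst z = 0).
      { destruct (Req_dec (fst x - fst z) 0); auto. pose proof (Rabs_pos_lt _ H2); lra. }
      assert (snd x - snd z = 0).
      { destruct (Req_dec (snd x - snd z) 0); auto. pose proof (Rabs_pos_lt _ H3); lra. }
      destruct x, z; simpl in *. replace r1 with r by lra. replace r2 with r0 by lra. exact Kx. }
    exists (exist _ (L1 x / 2) Hp). unfold U; simpl. lra.
  - set (rho := fold_right (fun (r : {r : R | 0 < r}) acc => Rmin (proj1_sig r) acc) 1 l).
    assert (Hrho : 0 < rho /\ forall r, In r l -> rho <= proj1_sig r).
    { unfold rho; clear Hl; induction l as [|r l IH]; simpl.
      - split; [lra|]. intros _ [].
      - destruct IH as [IH1 IH2]. destruct r as [r Hr]; simpl. split.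
        + apply Rmin_case; lra.
        + intros r' [<-|Hin]; simpl.
          * apply Rmin_l.
          * eapply Rle_trans; [apply Rmin_r|]. auto. }
    destruct Hrho as [Hr1 Hr2].
    exists (rho/2). split; [lra|]. intros w Hw Kw.
    destruct (Hl w Kw) as [r [Hin Ur]]. unfold U, L1 in Ur.
    pose proof (Hr2 r Hin).
    pose proof (abs_fst_le (Csub w z)). pose proof (abs_snd_le (Csub w z)).
    unfold Csub in *; simpl in *. lra.
Qed.

Lemma Cnorm_self z : Cnorm (Csub z z) = 0.
Proof. unfold Cnorm, Csub; simpl. rewrite !Rminus_diag. rewrite Rmult_0_l, Rplus_0_l. apply sqrt_0. Qed.

Section Cantor.
Variable n : nat -> nat.
Variable th eps : nat -> R.
Variable EPS : R.
Hypothesis Heps : Un_cv (fun N => sum_f_R0 eps N) EPS.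
Hypothesis eps_nn : forall j, 0 <= eps j.
Hypothesis th_nn : forall j, 0 <= th j.
Hypothesis th_le : forall j, th j <= eps j * 3.
Hypothesis hb : forall j k, h (INR (n k) * th j) <= eps j.
Hypothesis htend : forall j, Un_cv (fun k => h (INR (n k) * th j)) 0.
Hypothesis hpos : forall j, 0 < h (th j).
Hypothesis n0 : n 0%nat = 1%nat.

Definition bb (w : nat -> bool) j := if w j then th j else 0.

Lemma bb_bound w j : 0 <= bb w j <= eps j * 3.
Proof. unfold bb; destruct (w j); pose proof (th_nn j); pose proof (eps_nn j); pose proof (th_le j); lra. Qed.

Lemma dom_sig : {l | Un_cv (fun N => sum_f_R0 (fun j => eps j * 3) N) l}.
Proof.
  exists (3 * EPS). intros e He. destruct (Heps (e/3)) as [N HN]; [lra|]. exists N. intros m Hm.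
  rewrite <- (scal_sum eps m 3). unfold Rdist in *. specialize (HN m Hm).
  replace (3 * sum_f_R0 eps m - 3 * EPS) with (3 * (sum_f_R0 eps m - EPS)) by ring.
  rewrite Rabs_mult, (Rabs_right 3) by lra. lra.
Defined.

Definition Theta w := proj1_sig (Rseries_CV_comp (bb w) _ (bb_bound w) dom_sig).
Lemma Theta_cv w : Un_cv (fun N => sum_f_R0 (bb w) N) (Theta w).
Proof. unfold Theta. destruct (Rseries_CV_comp _ _ _ _); simpl; auto. Qed.

Lemma sum_le_EPS N : sum_f_R0 eps N <= EPS.
Proof.
  apply growing_ineq; auto. intro m. simpl. pose proof (eps_nn (S m)). lra.
Qed.

Lemma tail_small e : 0 < e -> exists N, EPS - sum_f_R0 eps N < e.
Proof.
  intros He. destruct (Heps e He) as [N HN]. exists N. specialize (HN N (le_n _)).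
  unfold Rdist in HN. apply Rabs_def2 in HN. lra.
Qed.

Lemma partial_tail x w w' N : (forall j, h (x * th j) <= eps j) ->
  (forall j, (j <= N)%nat -> w j = w' j) -> forall d,
  h (x * (sum_f_R0 (bb w) (N+d) - sum_f_R0 (bb w') (N+d))) <=
    sum_f_R0 eps (N+d) - sum_f_R0 eps N.
Proof.
  intros Hx Hag d. induction d.
  - rewrite Nat.add_0_r. rewrite (sum_eq (bb w) (bb w') N).
    + replace (x * (sum_f_R0 (bb w') N - sum_f_R0 (bb w') N)) with 0 by ring.
      rewrite h_0; lra.
    + intros i Hi. unfold bb; rewrite Hag; auto.
  - rewrite Nat.add_succ_r. cbn [sum_f_R0].
    replace (x * (sum_f_R0 (bb w) (N + d) + bb w (S (N + d)) -
      (sum_f_R0 (bb w') (N + d) + bb w' (S (N + d)))))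
      with (x * (sum_f_R0 (bb w) (N + d) - sum_f_R0 (bb w') (N + d)) +
            x * (bb w (S (N + d)) - bb w' (S (N + d)))) by ring.
    eapply Rle_trans; [apply h_add|].
    assert (h (x * (bb w (S (N + d)) - bb w' (S (N + d)))) <= eps (S (N + d))).
    { unfold bb. destruct (w (S (N+d))), (w' (S (N+d))).
      - rewrite Rminus_diag, Rmult_0_r, h_0; auto.
      - rewrite Rminus_0_r; auto.
      - replace (x * (0 - th (S (N + d)))) with (- (x * th (S (N+d)))) by ring.
        rewrite h_opp; auto.
      - rewrite Rminus_diag, Rmult_0_r, h_0; auto. }
    lra.
Qed.

Lemma Tail x w w' N : (forall j, h (x * th j) <= eps j) ->
  (forall j, (j <= N)%nat -> w j = w' j) ->
  h (x * (Theta w - Theta w')) <= EPS - sum_f_R0 eps N.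
Proof.
  intros Hx Hag. apply le_eta. intros η Hη.
  pose proof (CV_minus _ _ _ _ (Theta_cv w) (Theta_cv w')) as Hc.
  assert (Hq : 0 < η / (Rabs x + 1)).
  { apply Rdiv_lt_0_compat; auto. pose proof (Rabs_pos x); lra. }
  destruct (Hc _ Hq) as [M HM].
  specialize (HM (N + M)%nat ltac:(lia)). unfold Rdist in HM.
  pose proof (partial_tail x w w' N Hx Hag M) as HP.
  pose proof (sum_le_EPS (N+M)).
  set (DM := sum_f_R0 (bb w) (N + M) - sum_f_R0 (bb w') (N + M)) in *.
  replace (x * (Theta w - Theta w')) with (x * DM + x * (Theta w - Theta w' - DM)) by ring.
  eapply Rle_trans; [apply h_add|].
  assert (h (x * (Theta w - Theta w' - DM)) <= η).
  { eapply Rle_trans; [apply h_le|]. rewrite Rabs_mult.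
    rewrite Rabs_minus_sym in HM.
    assert (Rabs x * Rabs (Theta w - Theta w' - DM) <= (Rabs x + 1) * (η / (Rabs x + 1))).
    { apply Rmult_le_compat; try apply Rabs_pos; lra. }
    replace ((Rabs x + 1) * (η / (Rabs x + 1))) with η in H0 by (field; pose proof (Rabs_pos x); lra).
    lra. }
  lra.
Qed.

Lemma h1 j : h (1 * th j) <= eps j.
Proof. pose proof (hb j 0). rewrite n0 in H. simpl INR in H. exact H. Qed.

Definition KK z := exists w, z = E (Theta w).

Lemma cont w w' N : (forall j, (j <= N)%nat -> w j = w' j) ->
  Cnorm (Csub (E (Theta w')) (E (Theta w))) <= EPS - sum_f_R0 eps N.
Proof.
  intros Hag. rewrite dist_E.
  replace (Theta w' - Theta w) with (1 * (Theta w' - Theta w)) by ring.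
  apply Tail; [exact h1|]. intros; symmetry; auto.
Qed.

Definition tr (w : nat -> bool) N j := andb (w j) (Nat.leb j N).

Lemma Theta_trunc w N : Theta (tr w N) = sum_f_R0 (bb w) N.
Proof.
  apply (UL_sequence (fun M => sum_f_R0 (bb (tr w N)) M)); [apply Theta_cv|].
  assert (Hd : forall d, sum_f_R0 (bb (tr w N)) (N + d) = sum_f_R0 (bb w) N).
  { induction d.
    - rewrite Nat.add_0_r. apply sum_eq. intros i Hi. unfold bb, tr.
      assert (Nat.leb i N = true) by (apply Nat.leb_le; auto). rewrite H, andb_true_r; auto.
    - rewrite Nat.add_succ_r. cbn [sum_f_R0]. rewrite IHd. unfold bb, tr.
      assert (Nat.leb (S (N + d)) N = false) by (apply Nat.leb_gt; lia).
      rewrite H, andb_false_r. ring. }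
  intros e He. exists N. intros m Hm. replace m with (N + (m - N))%nat by lia.
  rewrite Hd. unfold Rdist. rewrite Rminus_diag, Rabs_R0. lra.
Qed.

Lemma partial_h w x N : h (x * sum_f_R0 (bb w) N) <= sum_f_R0 (fun j => h (x * th j)) N.
Proof.
  assert (Hb : forall j, h (x * bb w j) <= h (x * th j)).
  { intros j. unfold bb. destruct (w j); [lra|]. rewrite Rmult_0_r, h_0. apply h_ge0. }
  induction N; cbn [sum_f_R0]; auto.
  rewrite Rmult_plus_distr_l. eapply Rle_trans; [apply h_add|].
  pose proof (Hb (S N)). lra.
Qed.

Lemma fin_cv N : Un_cv (fun k => sum_f_R0 (fun j => h (INR (n k) * th j)) N) 0.
Proof.
  induction N; cbn [sum_f_R0].
  - apply htend.
  - pose proof (CV_plus _ _ _ _ IHN (htend (S N))). rewrite Rplus_0_r in H. exact H.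
Qed.

Lemma Cnorm_pow_E t m : Cnorm (Csub (Cpow (E t) m) Cone) = h (INR m * t).
Proof. rewrite Cpow_E, <- E_0, dist_E, Rminus_0_r. auto. Qed.

Lemma tend w : tends_to_one n (E (Theta w)).
Proof.
  unfold tends_to_one. intros e He.
  destruct (tail_small (e/2)) as [N HN]; [lra|].
  destruct (fin_cv N (e/2)) as [k0 Hk0]; [lra|].
  exists k0. intros k Hk. specialize (Hk0 k Hk). unfold Rdist in *.
  rewrite Cnorm_pow_E, Rminus_0_r, Rabs_right by (apply Rle_ge, h_ge0).
  rewrite Rminus_0_r in Hk0. apply Rabs_def2 in Hk0.
  set (x := INR (n k)) in *.
  replace (x * Theta w) with (x * Theta (tr w N) + x * (Theta w - Theta (tr w N))) by ring.
  eapply Rle_lt_trans; [apply h_add|].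
  rewrite Theta_trunc.
  pose proof (partial_h w x N).
  assert (h (x * (Theta w - Theta (tr w N))) <= EPS - sum_f_R0 eps N).
  { apply Tail; [intros j; apply hb|]. intros j Hj. unfold tr.
    assert (Nat.leb j N = true) by (apply Nat.leb_le; auto). rewrite H0, andb_true_r; auto. }
  rewrite Theta_trunc in H0. lra.
Qed.

Definition flip (w : nat -> bool) N j := if Nat.eqb j N then negb (w j) else w j.

Lemma Theta_flip w N : Theta (flip w N) = Theta w + (bb (flip w N) N - bb w N).
Proof.
  set (d := bb (flip w N) N - bb w N).
  assert (Hs : forall M, sum_f_R0 (bb (flip w N)) M =
     sum_f_R0 (bb w) M + (if Nat.leb N M then d else 0)).
  { induction M; cbn [sum_f_R0].
    - destruct N; simpl.
      + unfold d. ring.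
      + unfold bb, flip. simpl. ring.
    - rewrite IHM. destruct (Nat.eqb_spec (S M) N).
      + subst N. rewrite (proj2 (Nat.leb_gt (S M) M)) by lia. rewrite Nat.leb_refl.
        unfold d. ring.
      + assert (Hb : bb (flip w N) (S M) = bb w (S M)).
        { unfold bb, flip. apply Nat.eqb_neq in n1. rewrite n1. auto. }
        rewrite Hb.
        assert (Nat.leb N (S M) = Nat.leb N M).
        { destruct (Nat.leb_spec N (S M)), (Nat.leb_spec N M); auto; lia. }
        rewrite H. ring. }
  apply (UL_sequence (fun M => sum_f_R0 (bb (flip w N)) M)); [apply Theta_cv|].
  intros e He. destruct (Theta_cv w e He) as [N1 HN1]. exists (N1 + N)%nat.
  intros m Hm. rewrite Hs. rewrite (proj2 (Nat.leb_le N m)) by lia.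
  unfold Rdist. replace (sum_f_R0 (bb w) m + d - (Theta w + d)) with
    (sum_f_R0 (bb w) m - Theta w) by ring. apply HN1. lia.
Qed.

Lemma KK_compact : Ccompact KK.
Proof.
  intros I U Hop Hcov.
  apply NNPP; intro Hno.
  set (Fin := fun (s : nat -> bool) (N : nat) => exists l : list I, forall w,
    (forall j, (j < N)%nat -> w j = s j) -> exists i, In i l /\ U i (E (Theta w))).
  assert (F0 : forall s, ~ Fin s 0%nat).
  { intros s [l Hl]. apply Hno. exists l. intros z [w ->]. apply Hl. intros; lia. }
  set (upd := fun (s : nat -> bool) N (b : bool) j => if Nat.eqb j N then b else s j).
  assert (Fsplit : forall s N, Fin (upd s N false) (S N) -> Fin (upd s N true) (S N) -> Fin s N).
  { intros s N [l1 H1] [l2 H2]. exists (l1 ++ l2). intros w Hw.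
    destruct (w N) eqn:HwN.
    - destruct (H2 w) as [i [Hi Ui]].
      + intros j Hj. unfold upd. destruct (Nat.eqb_spec j N). subst; auto. apply Hw; lia.
      + exists i; split; auto. apply in_or_app; auto.
    - destruct (H1 w) as [i [Hi Ui]].
      + intros j Hj. unfold upd. destruct (Nat.eqb_spec j N). subst; auto. apply Hw; lia.
      + exists i; split; auto. apply in_or_app; auto. }
  set (step := fun s N => if excluded_middle_informative (Fin (upd s N false) (S N))
                          then upd s N true else upd s N false).
  assert (Inv : forall N, ~ Fin (iter_seq step N) N).
  { induction N.
    - apply F0.
    - change (iter_seq step (S N)) with (step (iter_seq step N) N).
      unfold step at 1.
      destruct (excluded_middle_informative (Fin (upd (iter_seq step N) N false) (S N))) as [Hf|Hf].
      + intro Ht. apply IHN. apply Fsplit; auto.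
      + exact Hf. }
  assert (Hso : forall s N j, j <> N -> step s N j = s j).
  { intros s N j Hj. unfold step. apply Nat.eqb_neq in Hj.
    destruct (excluded_middle_informative _); unfold upd; rewrite Hj; auto. }
  assert (Cons : forall j d, iter_seq step (S j + d) j = iter_seq step (S j) j).
  { intros j d; induction d.
    - rewrite Nat.add_0_r; auto.
    - rewrite Nat.add_succ_r.
      change (iter_seq step (S (S j + d)) j) with (step (iter_seq step (S j + d)%nat) (S j + d)%nat j).
      rewrite Hso by lia. exact IHd. }
  set (ws := fun j => iter_seq step (S j) j).
  assert (Agree : forall N j, (j < N)%nat -> ws j = iter_seq step N j).
  { intros N j Hj. unfold ws. replace N with (S j + (N - S j))%nat by lia. rewrite Cons; auto. }
  destruct (Hcov (E (Theta ws))) as [i Ui]; [exists ws; auto|].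
  destruct (Hop i _ Ui) as [e [He Hball]].
  destruct (tail_small e He) as [N HN].
  apply (Inv (S N)). exists (i :: nil). intros w Hw. exists i. split; [left; auto|].
  apply Hball. eapply Rle_lt_trans; [apply (cont ws w N)|exact HN].
  intros j Hj. rewrite (Agree (S N)) by lia. symmetry. apply Hw. lia.
Qed.

Lemma KK_sep : d_separable n KK.
Proof.
  exists (fun m => E (Theta (fun j => Nat.testbit m j))). split.
  - intros m. eexists; eauto.
  - intros z [w ->] e He. destruct (tail_small e He) as [N HN].
    exists (enc w (S N)). intros k. rewrite !Cpow_E, dist_E.
    rewrite <- Rmult_minus_distr_l.
    eapply Rle_trans; [apply (Tail _ _ _ N)|lra].
    + intros j; apply hb.
    + intros j Hj. apply enc_bits. lia.
Qed.

Lemma KK_perfect : Cperfect KK.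
Proof.
  split; [|split].
  - exists (E (Theta (fun _ => false))). exists (fun _ => false); auto.
  - apply compact_closed, KK_compact.
  - intros z [w ->] e He.
    destruct (tail_small e He) as [N HN].
    exists (E (Theta (flip w (S N)))).
    assert (Hd : Cnorm (Csub (E (Theta (flip w (S N)))) (E (Theta w))) = h (th (S N))).
    { rewrite dist_E, Theta_flip. unfold bb, flip. rewrite Nat.eqb_refl.
      destruct (w (S N)); simpl.
      - replace (Theta w + (0 - th (S N)) - Theta w) with (- th (S N)) by ring. apply h_opp.
      - f_equal. ring. }
    split; [exists (flip w (S N)); auto|]. split.
    + intros Heq. rewrite Heq, Cnorm_self in Hd. pose proof (hpos (S N)). lra.
    + rewrite Hd. pose proof (h1 (S N)). rewrite Rmult_1_l in H.
      pose proof (sum_le_EPS (S N)). cbn [sum_f_R0] in H0. lra.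
Qed.

Lemma cantor_main : exists K : Cx -> Prop,
    (forall z, K z -> onT z) /\ Cperfect K /\ Ccompact K /\
    d_separable n K /\ (forall lam, K lam -> tends_to_one n lam).
Proof.
  exists KK. split; [|split; [|split; [|split]]].
  - intros z [w ->]. apply Cnorm_E.
  - apply KK_perfect.
  - apply KK_compact.
  - apply KK_sep.
  - intros lam [w ->]. apply tend.
Qed.

End Cantor.

Lemma eps_cv : Un_cv (fun N => sum_f_R0 (fun j => (/2)^(S j)) N) 1.
Proof.
  pose proof (GP_infinite (/2)) as H. rewrite Rabs_right in H by lra.
  specialize (H ltac:(lra)). unfold Pser, infinite_sum in H.
  intros e He. destruct (H e He) as [N HN]. exists N. intros m Hm.
  specialize (HN m Hm). unfold Rdist in *.
  replace (sum_f_R0 (fun j => (/2)^(S j)) m) with (/2 * sum_f_R0 (fun j => 1 * (/2)^j) m).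
  - replace (/ (1 - /2)) with 2 in HN by field.
    replace (/ 2 * sum_f_R0 (fun j : nat => 1 * (/ 2) ^ j) m - 1)
      with (/2 * (sum_f_R0 (fun j : nat => 1 * (/ 2) ^ j) m - 2)) by field.
    rewrite Rabs_mult, (Rabs_right (/2)) by lra. lra.
  - rewrite scal_sum. apply sum_eq. intros i _. simpl. ring.
Qed.

Lemma Cpow_1 l : Cpow l 1 = l.
Proof. destruct l; unfold Cpow, Cmul, Cone; simpl; f_equal; ring. Qed.

Lemma Cpow_Cone m : Cpow Cone m = Cone.
Proof. rewrite <- E_0, Cpow_E, Rmult_0_r; auto. Qed.

Lemma hx_abs x t : h (x * Rabs t) = h (x * t).
Proof.
  destruct (Rcase_abs t).
  - rewrite Rabs_left by auto. replace (x * - t) with (- (x * t)) by ring. apply h_opp.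
  - rewrite Rabs_right; auto.
Qed.

Lemma Cnorm_zero_eq a b : Cnorm (Csub a b) = 0 -> a = b.
Proof.
  destruct a as [a1 a2], b as [b1 b2]. unfold Cnorm, Csub; simpl. intros H.
  assert (Hz : 0 <= (a1 - b1) * (a1 - b1) + (a2 - b2) * (a2 - b2)).
  { apply Rplus_le_le_0_compat; apply Rle_0_sqr. }
  apply (sqrt_eq_0 _ Hz) in H.
  destruct (Rplus_sqr_eq_0 (a1 - b1) (a2 - b2) H).
  f_equal; lra.
Qed.

Theorem lemma4p3 (n : nat -> nat) :
  (forall k, (0 < n k)%nat) ->
  (forall k, (n k < n (S k))%nat) ->
  n 0%nat = 1%nat ->
  (forall eps, 0 < eps ->
     exists lam, onT lam /\ lam <> Cone /\ d_le n lam Cone eps /\ tends_to_one n lam) ->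
  exists K : Cx -> Prop,
    (forall z, K z -> onT z) /\ Cperfect K /\ Ccompact K /\
    d_separable n K /\ (forall lam, K lam -> tends_to_one n lam).
Proof.
  intros Hpos Hinc Hn0 Hyp.
  set (eps := fun j : nat => (/2)^(S j)).
  assert (eps_pos : forall j, 0 < eps j) by (intros; apply pow_lt; lra).
  assert (eps_le : forall j, eps j <= /2).
  { intros j. unfold eps. simpl. assert ((/2)^j <= 1) by (rewrite <- (pow1 j); apply pow_incr; lra).
    pose proof (pow_lt (/2) j ltac:(lra)). nra. }
  assert (Hch : forall j : nat, exists th : R, 0 <= th /\ th <= eps j * 3 /\
     (forall k, h (INR (n k) * th) <= eps j) /\ Un_cv (fun k => h (INR (n k) * th)) 0 /\
     0 < h th).
  { intros j. destruct (Hyp (eps j) (eps_pos j)) as [l [HT [Hne [Hd Ht]]]].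
    assert (Hd0 := Hd 0%nat). rewrite Hn0, Cpow_1, Cpow_Cone in Hd0.
    destruct (angle l (eps j) HT (conj (eps_pos j) (eps_le j)) Hd0) as [t [Et Ht3]].
    subst l.
    exists (Rabs t). split; [apply Rabs_pos|]. split; [lra|]. split; [|split].
    - intros k. rewrite hx_abs, <- Cnorm_pow_E. specialize (Hd k).
      rewrite Cpow_Cone in Hd. exact Hd.
    - eapply Un_cv_ext; [|exact Ht]. intros k. simpl. rewrite hx_abs, Cnorm_pow_E. auto.
    - replace (Rabs t) with (1 * Rabs t) by ring. rewrite hx_abs, Rmult_1_l.
      replace t with (INR 1 * t) by (simpl; ring). rewrite <- Cnorm_pow_E, Cpow_1.
      unfold Cnorm. destruct (Rle_lt_or_eq_dec _ _ (sqrt_pos (fst (Csub (E t) Cone) * fst (Csub (E t) Cone) +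
        snd (Csub (E t) Cone) * snd (Csub (E t) Cone)))) as [Hl|Hl]; auto.
      exfalso. apply Hne. apply Cnorm_zero_eq. unfold Cnorm. auto. }
  set (th := fun j => proj1_sig (constructive_indefinite_description _ (Hch j))).
  assert (Hth : forall j, 0 <= th j /\ th j <= eps j * 3 /\
     (forall k, h (INR (n k) * th j) <= eps j) /\ Un_cv (fun k => h (INR (n k) * th j)) 0 /\
     0 < h (th j)).
  { intros j. unfold th. destruct (constructive_indefinite_description _ (Hch j)); simpl; auto. }
  apply (cantor_main n th eps 1).
  - exact eps_cv.
  - intros j; left; auto.
  - apply Hth.
  - apply Hth.
  - apply Hth.
  - apply Hth.
  - apply Hth.
  - exact Hn0.
Qed.
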